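(* Assume the regularity conditions (C1) and (C2) below, let $\hat\Lambda$ be a given selection rule, and let $\hat{\boldsymbol\theta}$ be a coherent estimator of $\boldsymbol\theta$ (true support $\Lambda$) whose selective biases $\mathbf b_k(\boldsymbol\theta,\Lambda)$ are differentiable in $\boldsymbol\theta_\Lambda$. Then the MSSE satisfies $$\mathrm{E}_{\boldsymbol\theta_\Lambda}[\mathbf C(\hat{\boldsymbol\theta},\hat\Lambda,\boldsymbol\theta)]\succeq \mathbf B_{\mathrm{sCRB}}(\boldsymbol\theta_\Lambda):=\sum_{k=1}^K\pi_k(\boldsymbol\theta_\Lambda)\Big(\boldsymbol\Psi_k(\boldsymbol\theta,\Lambda)+\mathbf b_k(\boldsymbol\theta,\Lambda)\mathbf b_k^T(\boldsymbol\theta,\Lambda)\Big),$$ where $\boldsymbol\Psi_k(\boldsymbol\theta,\Lambda)=(\mathbf D_k(\Lambda)+\mathbf G_k(\boldsymbol\theta,\Lambda))\mathbf J_k^{-1}(\boldsymbol\theta_\Lambda)(\mathbf D_k(\Lambda)+\mathbf G_k(\boldsymbol\theta,\Lambda))^T$ (sum over $k$ with $\pi_k(\boldsymbol\theta_\Lambda)\neq0$). Furthermore, the MSE matrix satisfies $$\mathrm{MSE}(\hat{\boldsymbol\theta},\boldsymbol\theta,\Lambda)\succeq \mathbf B_{\mathrm{sCRB}}(\boldsymbol\theta_\Lambda)+\sum_{k=1}^K\pi_k(\boldsymbol\theta_\Lambda)\boldsymbol\theta^{\mathrm{ZP}}_{\Lambda_k^c}(\boldsymbol\theta^{\mathrm{ZP}}_{\Lambda_k^c})^T-\sum_{k=1}^K\pi_k(\boldsymbol\theta_\Lambda)\Big(\boldsymbol\theta^{\mathrm{ZP}}_{\Lambda_k^c}\mathbf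 b_k^T(\boldsymbol\theta,\Lambda)+\mathbf b_k(\boldsymbol\theta,\Lambda)(\boldsymbol\theta^{\mathrm{ZP}}_{\Lambda_k^c})^T\Big).$$ In particular, if $\mathbf b_k\equiv\mathbf 0$ for all $k$, then $\mathbf B_{\mathrm{sCRB}}(\boldsymbol\theta_\Lambda)=\sum_{k=1}^K\pi_k(\boldsymbol\theta_\Lambda)\mathbf D_k(\Lambda)\mathbf J_k^{-1}(\boldsymbol\theta_\Lambda)\mathbf D_k^T(\Lambda)$.
   Context: Setting (estimation after model selection). $\boldsymbol\theta\in\mathbb{R}^M$ is an unknown deterministic vector. A finite family of nonempty candidate support sets $\Lambda_1,\dots,\Lambda_K\subseteq\{1,\dots,M\}$ is known; the true support $\Lambda$ is one of them, $\boldsymbol\theta_{\Lambda^c}=\mathbf 0$. $\boldsymbol\theta_S$ is the subvector indexed by $S$; $[\Lambda]_l$ denotes the $l$-th element of $\Lambda$ (in increasing order). The observation $\mathbf x\in\Omega_{\mathbf x}$ has pdf $f(\mathbf x;\boldsymbol\theta_\Lambda)$; $\mathrm{E}_{\boldsymbol\theta_\Lambda}$ is expectation under it. A selection rule is a deterministic measurable $\hat\Lambda:\Omega_{\mathbf x}\to\{\Lambda_1,\dots,\Lambda_K\}$; $\mathcal A_k=\{\mathbf x:\hat\Lambda(\mathbf x)=\Lambda_k\}$, $\pi_k(\boldsymbol\theta_\Lambda)=\Pr(\hat\Lambda=\Lambda_k;\boldsymbol\theta_\Lambda)$, and for $\pi_k\ne0$, $f(\mathbf x\mid\hat\Lambda=\Lambda_k;\boldsymbol\theta_\Lambda)=f(\mathbf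 x;\boldsymbol\theta_\Lambda)/\pi_k(\boldsymbol\theta_\Lambda)$ for $\mathbf x\in\mathcal A_k$. Zero-padding: $\mathbf a^{\mathrm{ZP}}_S\in\mathbb{R}^M$ has entry $a_m$ if $m\in S$, else $0$. Estimators $\hat{\boldsymbol\theta}:\Omega_{\mathbf x}\to\mathbb{R}^M$ have finite second moments; coherent means $\hat\theta_m(\mathbf x)=0$ whenever $m\notin\hat\Lambda(\mathbf x)$. SSE cost $\mathbf C(\hat{\boldsymbol\theta},\hat\Lambda,\boldsymbol\theta)=(\hat{\boldsymbol\theta}^{\mathrm{ZP}}_{\hat\Lambda}-\boldsymbol\theta^{\mathrm{ZP}}_{\hat\Lambda})(\hat{\boldsymbol\theta}^{\mathrm{ZP}}_{\hat\Lambda}-\boldsymbol\theta^{\mathrm{ZP}}_{\hat\Lambda})^T$; MSSE is its expectation; $\mathrm{MSE}(\hat{\boldsymbol\theta},\boldsymbol\theta,\Lambda)=\mathrm{E}_{\boldsymbol\theta_\Lambda}[(\hat{\boldsymbol\theta}-\boldsymbol\theta)(\hat{\boldsymbol\theta}-\boldsymbol\theta)^T]$. Selective bias $\mathbf b_k(\boldsymbol\theta,\Lambda)=\mathrm{E}_{\boldsymbol\theta_\Lambda}[\hat{\boldsymbol\theta}^{\mathrm{ZP}}_{\Lambda_k}-\boldsymbol\theta^{\mathrm{ZP}}_{\Lambda_k}\mid\hat\Lambda=\Lambda_k]$; $\mathbf G_k(\boldsymbol\theta,\Lambda)=\nabla_{\boldsymbol\theta_\Lambda}\mathbf b_k(\boldsymbol\theta,\Lambda)\in\mathbb{R}^{M\times|\Lambda|}$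 (entry $(m,l)$ is $\partial[\mathbf b_k]_m/\partial[\boldsymbol\theta_\Lambda]_l$). Post-model-selection score: $\boldsymbol\upsilon_k(\mathbf x,\boldsymbol\theta_\Lambda)=\nabla^T_{\boldsymbol\theta_\Lambda}\log f(\mathbf x\mid\hat\Lambda=\Lambda_k;\boldsymbol\theta_\Lambda)$ for $\mathbf x\in\mathcal A_k$ (a $|\Lambda|$-dimensional column vector). Selective FIM: $\mathbf J_k(\boldsymbol\theta_\Lambda)=\mathrm{E}_{\boldsymbol\theta_\Lambda}[\boldsymbol\upsilon_k\boldsymbol\upsilon_k^T\mid\hat\Lambda=\Lambda_k]$. $\mathbf D_k(\Lambda)$ is the $M\times|\Lambda|$ 0-1 matrix with $[\mathbf D_k(\Lambda)]_{m,l}=1$ if $m\in\Lambda_k$ and $m=[\Lambda]_l$, and $0$ otherwise. Regularity: (C1) the vectors $\boldsymbol\upsilon_k$ exist and the matrices $\mathbf J_k(\boldsymbol\theta_\Lambda)$ are well defined and nonsingular for all $\boldsymbol\theta_\Lambda\in\mathbb{R}^{|\Lambda|}$, $k=1,\dots,K$; (C2) for all $k$, every measurable $g:\Omega_{\mathbf x}\to\mathbb{R}$ (for which the integrals exist) and all $\boldsymbol\theta_\Lambda$, $\nabla_{\boldsymbol\theta_\Lambda}\int_{\mathcal A_k}g(\mathbf x)f(\mathbf x\mid\hat\Lambda=\Lambda_k;\boldsymbol\theta_\Lambda)\,d\mathbf x=\int_{\mathcal A_k}g(\mathbf x)\nabla_{\boldsymbol\theta_\Lambda}f(\mathbf x\mid\hat\Lambda=\Lambda_k;\boldsymbol\theta_\Lambda)\,d\mathbf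 x$. $\succeq$ is the positive semidefinite order. *)

(* Defs.v *)
From HB Require Import structures.
From mathcomp Require Import all_boot all_order all_algebra.
From mathcomp Require Import all_classical all_reals all_analysis.
Set Implicit Arguments.
Unset Strict Implicit.
Unset Printing Implicit Defensive.
Import Order.TTheory GRing.Theory Num.Theory.
Import numFieldNormedType.Exports.
Local Open Scope classical_set_scope.
Local Open Scope ring_scope.

Definition psd (R : realType) (n : nat) (A : 'M[R]_n) : Prop :=
  forall v : 'cV[R]_n, 0 <= (v^T *m A *m v) 0 0.
Definition psd_ge (R : realType) (n : nat) (A B : 'M[R]_n) : Prop :=
  psd (A - B).

Definition ebasis {R : realType} {L : nat} (l : 'I_L) : 'cV[R]_L :=
  delta_mx l 0.

(* [Lam]_l = enum_val l : the l-th element of Lam in increasing order.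
   theta = embedding of theta_Lam into R^M (zero outside Lam). *)
Definition theta_of (R : realType) (M : nat) (Lam : {set 'I_M})
  (t : 'cV[R]_#|Lam|) : 'cV[R]_M :=
  \col_m \sum_(l < #|Lam|) (if m == enum_val l then t l 0 else 0).

Definition Dmat {R : realType} (M : nat) (Lk Lam : {set 'I_M})
  : 'M[R]_(M, #|Lam|) :=
  \matrix_(m, l) (((m \in Lk) && (m == enum_val l))%:R).

Definition zp (R : realType) (M : nat) (S : {set 'I_M}) (a : 'cV[R]_M)
  : 'cV[R]_M := \col_m (if m \in S then a m 0 else 0).

Section Model.
Variables (R : realType) (d : measure_display) (T : measurableType d).
Variable (mu : {measure set T -> \bar R}).
Variables (L K : nat).
Variable (f : 'cV[R]_L -> T -> R).   (* f (theta_Lam) x = f(x; theta_Lam) *)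
Variable (sel : T -> 'I_K).           (* selection rule, as an index *)

Definition selset (k : 'I_K) : set T := sel @^-1` [set k].
Definition prob (k : 'I_K) (t : 'cV[R]_L) : R := Rintegral mu (selset k) (f t).
Definition fcond (k : 'I_K) (x : T) (t : 'cV[R]_L) : R := f t x / prob k t.
Definition cexp (k : 'I_K) (t : 'cV[R]_L) (g : T -> R) : R :=
  Rintegral mu (selset k) (fun x => g x * fcond k x t).
Definition cexpmx (p q : nat) (k : 'I_K) (t : 'cV[R]_L) (G : T -> 'M[R]_(p, q))
  : 'M[R]_(p, q) := \matrix_(i, j) cexp k t (fun x => G x i j).
Definition expmx (p q : nat) (t : 'cV[R]_L) (G : T -> 'M[R]_(p, q))
  : 'M[R]_(p, q) := \matrix_(i, j) Rintegral mu setT (fun x => G x i j * f t x).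
(* post-model-selection score: grad of log f(x|sel=k;.) = grad fcond / fcond
   (set to 0 where fcond = 0, a null set for the conditional law) *)
Definition score (k : 'I_K) (x : T) (t : 'cV[R]_L) : 'cV[R]_L :=
  \col_l ('D_(ebasis l) (fcond k x) t / fcond k x t).
Definition sFIM (k : 'I_K) (t : 'cV[R]_L) : 'M[R]_L :=
  cexpmx k t (fun x => score k x t *m (score k x t)^T).
End Model.

Section Estimation.
Variables (R : realType) (d : measure_display) (T : measurableType d).
Variable (mu : {measure set T -> \bar R}).
Variables (M K : nat) (Lams : 'I_K -> {set 'I_M}) (Lam : {set 'I_M}).
Variable (f : 'cV[R]_#|Lam| -> T -> R).
Variable (sel : T -> 'I_K).
Variable (th : T -> 'cV[R]_M).

Definition sbias (k : 'I_K) (t : 'cV[R]_#|Lam|) : 'cV[R]_M :=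
  cexpmx mu f sel k t
    (fun x => zp (Lams k) (th x) - zp (Lams k) (theta_of t)).
Definition Gmat (k : 'I_K) (t : 'cV[R]_#|Lam|) : 'M[R]_(M, #|Lam|) :=
  \matrix_(m, l) ('D_(ebasis l) (sbias k) t) m 0.
Definition Psi (k : 'I_K) (t : 'cV[R]_#|Lam|) : 'M[R]_M :=
  (Dmat (Lams k) Lam + Gmat k t) *m invmx (sFIM mu f sel k t)
    *m (Dmat (Lams k) Lam + Gmat k t)^T.
Definition BsCRB (t : 'cV[R]_#|Lam|) : 'M[R]_M :=
  \sum_(k < K | prob mu f sel k t != 0)
     prob mu f sel k t *: (Psi k t + sbias k t *m (sbias k t)^T).
Definition SSE (t : 'cV[R]_#|Lam|) (x : T) : 'M[R]_M :=
  (zp (Lams (sel x)) (th x) - zp (Lams (sel x)) (theta_of t)) *m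
  (zp (Lams (sel x)) (th x) - zp (Lams (sel x)) (theta_of t))^T.
Definition MSSE (t : 'cV[R]_#|Lam|) : 'M[R]_M := expmx mu f t (SSE t).
Definition MSE (t : 'cV[R]_#|Lam|) : 'M[R]_M :=
  expmx mu f t (fun x => (th x - theta_of t) *m (th x - theta_of t)^T).
End Estimation.

(* Main.v *)
Require Import Defs.
From HB Require Import structures.
From mathcomp Require Import all_boot all_order all_algebra.
From mathcomp Require Import all_classical all_reals all_analysis.
From mathcomp Require Import measurable_realfun.
From mathcomp Require Import lra ring.
Set Implicit Arguments.
Unset Strict Implicit.
Unset Printing Implicit Defensive.
Import Order.TTheory GRing.Theory Num.Theory.
Import numFieldNormedType.Exports.
Local Open Scope classical_set_scope.
Local Open Scope ring_scope.


Lemma mxsubE (R : ringType) m n (A B : 'M[R]_(m, n)) i j : (A - B) i j = A i j - B i j.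
Proof. by rewrite !mxE. Qed.
Lemma mxaddE (R : ringType) m n (A B : 'M[R]_(m, n)) i j : (A + B) i j = A i j + B i j.
Proof. by rewrite !mxE. Qed.
Lemma mxscaleE (R : ringType) m n c (A : 'M[R]_(m, n)) i j : (c *: A) i j = c * A i j.
Proof. by rewrite !mxE. Qed.
Lemma mxzeroE (R : ringType) m n i j : (0 : 'M[R]_(m, n)) i j = 0.
Proof. by rewrite !mxE. Qed.

Section RintTools.
Context d (T : measurableType d) (R : realType) (mu : {measure set T -> \bar R}).
Variable D : set T.
Hypothesis mD : measurable D.

Lemma ieq (f g : T -> \bar R) : mu.-integrable D f -> (forall x, D x -> f x = g x) ->
  mu.-integrable D g.
Proof. by move=> i e; apply: (eq_integrable mD f) i => x /set_mem; exact: e. Qed.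

Lemma Rintegral_sum (I : Type) (s : seq I) (h : I -> T -> R) :
  (forall i, mu.-integrable D (EFin \o h i)) ->
  \int[mu]_(x in D) (\sum_(i <- s) h i x) = \sum_(i <- s) \int[mu]_(x in D) h i x.
Proof.
move=> hi; elim: s => [|i s ih].
  under eq_Rintegral do rewrite big_nil.
  by rewrite big_nil Rintegral_cst // mul0r.
under eq_Rintegral do rewrite big_cons.
rewrite big_cons RintegralD // ?ih //.
apply: (ieq (integrable_sum mD s (P:=xpredT) (fun j _ => hi j))).
by move=> x _ /=; rewrite -sumEFin.
Qed.

Lemma integrable_sumR (I : Type) (s : seq I) (h : I -> T -> R) :
  (forall i, mu.-integrable D (EFin \o h i)) ->
  mu.-integrable D (EFin \o (fun x => \sum_(i <- s) h i x)).
Proof.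
move=> hi; apply: (ieq (integrable_sum mD s (P:=xpredT) (fun j _ => hi j))).
by move=> x _ /=; rewrite -sumEFin.
Qed.

Variable rho : T -> R.
Hypothesis rho0 : forall x, D x -> 0 <= rho x.

Definition Ex (h : T -> R) := \int[mu]_(x in D) (h x * rho x).
Definition Ix (h : T -> R) := mu.-integrable D (EFin \o (fun x => h x * rho x)).

Lemma IxD h1 h2 : Ix h1 -> Ix h2 -> Ix (fun x => h1 x + h2 x).
Proof.
move=> i1 i2; apply: (ieq (integrableD mD i1 i2)) => x _ /=.
by rewrite mulrDl.
Qed.

Lemma IxZ c h : Ix h -> Ix (fun x => c * h x).
Proof.
move=> i; apply: (ieq (integrableZl mD c i)) => x _ /=.
by rewrite -EFinM mulrA.
Qed.

Lemma IxN h : Ix h -> Ix (fun x => - h x).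
Proof.
move=> i; apply: (ieq (IxZ (-1) i)) => x _ /=.
by rewrite mulN1r.
Qed.

Lemma IxB h1 h2 : Ix h1 -> Ix h2 -> Ix (fun x => h1 x - h2 x).
Proof. by move=> i1 i2; apply: IxD => //; apply: IxN. Qed.

Lemma Ixsum (I : Type) (s : seq I) (h : I -> T -> R) :
  (forall i, Ix (h i)) -> Ix (fun x => \sum_(i <- s) h i x).
Proof.
move=> hi; apply: (ieq (integrable_sumR s hi)) => x _ /=.
by rewrite mulr_suml.
Qed.

Lemma Ix_eq h1 h2 : (forall x, D x -> h1 x = h2 x) -> Ix h1 -> Ix h2.
Proof. by move=> e i; apply: (ieq i) => x Dx /=; rewrite e. Qed.

Lemma ExD h1 h2 : Ix h1 -> Ix h2 -> Ex (fun x => h1 x + h2 x) = Ex h1 + Ex h2.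
Proof.
move=> i1 i2; rewrite /Ex -RintegralD //.
by apply: eq_Rintegral => x _; rewrite mulrDl.
Qed.

Lemma ExZ c h : Ix h -> Ex (fun x => c * h x) = c * Ex h.
Proof.
move=> i; rewrite /Ex -RintegralZl //.
by apply: eq_Rintegral => x _; rewrite mulrA.
Qed.

Lemma ExN h : Ix h -> Ex (fun x => - h x) = - Ex h.
Proof.
move=> i; rewrite -mulN1r -ExZ //; rewrite /Ex.
by apply: eq_Rintegral => x _; rewrite mulN1r.
Qed.

Lemma ExB h1 h2 : Ix h1 -> Ix h2 -> Ex (fun x => h1 x - h2 x) = Ex h1 - Ex h2.
Proof. by move=> i1 i2; rewrite ExD ?ExN //; apply: IxN. Qed.

Lemma Exsum (I : Type) (s : seq I) (h : I -> T -> R) :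
  (forall i, Ix (h i)) -> Ex (fun x => \sum_(i <- s) h i x) = \sum_(i <- s) Ex (h i).
Proof.
move=> hi; rewrite /Ex -Rintegral_sum //.
by apply: eq_Rintegral => x _; rewrite mulr_suml.
Qed.

Lemma Ex_eq h1 h2 : (forall x, D x -> h1 x = h2 x) -> Ex h1 = Ex h2.
Proof. by move=> e; apply: eq_Rintegral => x /set_mem Dx; rewrite e. Qed.

Lemma Ex_sq_ge0 h : 0 <= Ex (fun x => h x * h x).
Proof.
by apply: Rintegral_ge0 => x Dx; rewrite mulr_ge0 ?rho0 // -expr2 sqr_ge0.
Qed.

Lemma IxM h1 h2 : measurable_fun D (fun x => h1 x * h2 x * rho x) ->
  Ix (fun x => h1 x * h1 x) -> Ix (fun x => h2 x * h2 x) -> Ix (fun x => h1 x * h2 x).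
Proof.
move=> m i1 i2; have i12 := IxD i1 i2.
apply: (le_integrable mD _ _ i12).
  by apply/measurable_EFinP.
move=> x Dx /=; rewrite lee_fin !normrM (ger0_norm (rho0 Dx)) ler_wpM2r ?rho0 //.
rewrite [X in _ <= X]ger0_norm; last by apply: addr_ge0; rewrite -expr2 sqr_ge0.
have h : 0 <= (`|h1 x| - `|h2 x|) ^+ 2 by rewrite sqr_ge0.
move: h; rewrite sqrrB !real_normK ?num_real // -!expr2 => h.
have : 0 <= `|h1 x| * `|h2 x| by rewrite mulr_ge0.
move: h; rewrite !expr2 -mulr_natr; lra.
Qed.

End RintTools.


Lemma trE (R : ringType) m n (B : 'M[R]_(m, n)) i j : B^T i j = B j i.
Proof. by rewrite mxE. Qed.

Section CS.
Context d (T : measurableType d) (R : realType) (mu : {measure set T -> \bar R}).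
Variable D : set T.
Hypothesis mD : measurable D.
Variable rho : T -> R.
Hypothesis rho0 : forall x, D x -> 0 <= rho x.
Local Notation E := (Ex mu D rho).
Local Notation I := (Ix mu D rho).

Lemma cs_scalar L (a : T -> R) (v : T -> 'cV[R]_L) (J : 'M[R]_L) (q : 'cV[R]_L) :
  I (fun x => a x * a x) ->
  (forall i, I (fun x => a x * v x i 0)) ->
  (forall i j, I (fun x => v x i 0 * v x j 0)) ->
  (forall i, E (fun x => a x * v x i 0) = q i 0) ->
  (forall i j, E (fun x => v x i 0 * v x j 0) = J i j) ->
  J \in unitmx ->
  (q^T *m invmx J *m q) 0 0 <= E (fun x => a x * a x).
Proof.
move=> Iaa Iav Ivv Eav Evv Ju.
pose z := invmx J *m q.
have Jz : J *m z = q by rewrite /z mulKVmx.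
pose c x := a x - \sum_i z i 0 * v x i 0.
have H0 := Ex_sq_ge0 mu rho0 c.
have ec : forall x, c x * c x = a x * a x
    + \sum_i (-(2 * z i 0) * (a x * v x i 0))
    + \sum_i (z i 0 * \sum_j (z j 0 * (v x i 0 * v x j 0))).
  move=> x; rewrite /c.
  set s := \sum_i _.
  have -> : (a x - s) * (a x - s) = a x * a x - 2 * (a x * s) + s * s by ring.
  congr (_ + _); first congr (_ + _).
    by rewrite /s mulr_sumr mulr_sumr -sumrN; apply: eq_bigr => i _; ring.
  rewrite /s mulr_suml; apply: eq_bigr => i _.
  rewrite mulr_sumr mulr_sumr; apply: eq_bigr => j _; ring.
have Iv i : I (fun x => v x i 0 * v x i 0) by exact: Ivv.
have I2 : I (fun x => \sum_i (-(2 * z i 0) * (a x * v x i 0))).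
  by apply: (Ixsum mD) => i; apply: (IxZ mD).
have I3 : I (fun x => \sum_i (z i 0 * \sum_j (z j 0 * (v x i 0 * v x j 0)))).
  apply: (Ixsum mD) => i; apply: (IxZ mD); apply: (Ixsum mD) => j; apply: (IxZ mD); exact: Ivv.
have EE : E (fun x => c x * c x) = E (fun x => a x * a x)
    + \sum_i (-(2 * z i 0) * q i 0) + \sum_i (z i 0 * q i 0).
  rewrite (Ex_eq mu rho (fun x (_ : D x) => ec x)).
  rewrite (ExD mD) //; last exact: (IxD mD).
  rewrite (ExD mD) // (Exsum mD); last by move=> i; apply: (IxZ mD).
  rewrite (Exsum mD); last by move=> i; apply: (IxZ mD); apply: (Ixsum mD) => j; apply: (IxZ mD).
  congr (_ + _ + _); apply: eq_bigr => i _.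
    by rewrite (ExZ mD) // Eav.
  rewrite (ExZ mD); last by apply: (Ixsum mD) => j; apply: (IxZ mD).
  rewrite (Exsum mD); last by move=> j; apply: (IxZ mD).
  congr (_ * _); rewrite -Jz mxE; apply: eq_bigr => j _.
  by rewrite (ExZ mD) // Evv mulrC.
have ES : \sum_i (z i 0 * q i 0) = (q^T *m invmx J *m q) 0 0.
  have -> : (q^T *m invmx J *m q) 0 0 = ((q^T *m invmx J *m q)^T) 0 0 by rewrite [RHS]mxE.
  rewrite !trmx_mul trmxK mulmxA -trmx_mul mxE; apply: eq_bigr => i _.
  by rewrite trE.
have E2 : \sum_i (-(2 * z i 0) * q i 0) = - (2 * \sum_i (z i 0 * q i 0)).
  rewrite mulr_sumr -sumrN; apply: eq_bigr => i _; ring.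
move: H0; rewrite EE E2 ES.
lra.
Qed.

Lemma cs_vec M L (u : T -> 'cV[R]_M) (v : T -> 'cV[R]_L)
    (C : 'M[R]_M) (Q : 'M[R]_(M, L)) (J : 'M[R]_L) :
  (forall i j, I (fun x => u x i 0 * u x j 0)) ->
  (forall m l, I (fun x => u x m 0 * v x l 0)) ->
  (forall i j, I (fun x => v x i 0 * v x j 0)) ->
  (forall i j, E (fun x => u x i 0 * u x j 0) = C i j) ->
  (forall m l, E (fun x => u x m 0 * v x l 0) = Q m l) ->
  (forall i j, E (fun x => v x i 0 * v x j 0) = J i j) ->
  J \in unitmx ->
  psd (C - Q *m invmx J *m Q^T).
Proof.
move=> Iuu Iuv Ivv Euu Euv Evv Ju w.
pose a x := \sum_m w m 0 * u x m 0.
pose q := Q^T *m w.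
have eaa x : a x * a x = \sum_i w i 0 * \sum_j (w j 0 * (u x j 0 * u x i 0)).
  rewrite /a mulr_suml; apply: eq_bigr => i _.
  rewrite mulr_sumr mulr_sumr; apply: eq_bigr => j _; ring.
have eav l x : a x * v x l 0 = \sum_m w m 0 * (u x m 0 * v x l 0).
  by rewrite /a mulr_suml; apply: eq_bigr => m _; rewrite mulrA.
have Iaa : I (fun x => a x * a x).
  apply: (Ix_eq mD (fun x (_ : D x) => esym (eaa x))).
  apply: (Ixsum mD) => i; apply: (IxZ mD); apply: (Ixsum mD) => j; exact: (IxZ mD).
have Iav l : I (fun x => a x * v x l 0).
  apply: (Ix_eq mD (fun x (_ : D x) => esym (eav l x))).
  apply: (Ixsum mD) => m; exact: (IxZ mD).
have Eav l : E (fun x => a x * v x l 0) = q l 0.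
  rewrite (Ex_eq mu rho (fun x (_ : D x) => eav l x)).
  rewrite (Exsum mD); last by move=> m; apply: (IxZ mD).
  rewrite mxE; apply: eq_bigr => m _.
  by rewrite (ExZ mD) // Euv trE mulrC.
have := cs_scalar Iaa Iav Ivv Eav Evv Ju.
rewrite (Ex_eq mu rho (fun x (_ : D x) => eaa x)).
rewrite (Exsum mD); last first.
  by move=> i; apply: (IxZ mD); apply: (Ixsum mD) => j; exact: (IxZ mD).
have -> : \sum_i E (fun x => w i 0 * \sum_j w j 0 * (u x j 0 * u x i 0))
    = (w^T *m C *m w) 0 0.
  rewrite mxE; apply: eq_bigr => i _.
  rewrite (ExZ mD); last by apply: (Ixsum mD) => j; exact: (IxZ mD).
  rewrite (Exsum mD); last by move=> j; exact: (IxZ mD).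
  rewrite mxE mulr_suml mulr_sumr; apply: eq_bigr => j _.
  rewrite (ExZ mD) // Euu trE.
  ring.
move=> h.
rewrite mulmxBr mulmxBl mxsubE subr_ge0.
apply: le_trans h.
by rewrite /q trmx_mul trmxK !mulmxA.
Qed.

End CS.


Section Deriv.
Context {R : realType} {V : normedModType R}.

Lemma deriv_min0 (F : V -> R) (t v : V) :
  derivable F t v -> F t = 0 -> (forall s, 0 <= F s) -> 'D_v F t = 0.
Proof.
move=> dF Ft0 F0.
apply/eqP; rewrite eq_le; apply/andP; split.
  rewrite /derive (cvg_at_leftE (fun h : R => h^-1 *: ((F \o shift t) (h *: v) - F t))) //.
  apply: limr_le.
    rewrite -(cvg_at_leftE (fun h : R => h^-1 *: ((F \o shift t) (h *: v) - F t))) //.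
    apply: cvg_trans dF; apply: cvg_app.
    move=> A [e egt0 Ae]; exists e => // x xe xlt0; apply: Ae => //.
    exact/ltr0_neq0.
  near=> h; rewrite Ft0 subr0 /=.
  apply: mulr_le0_ge0; last exact: F0.
  by rewrite invr_le0; apply: ltW; near: h; exists 1 => /=.
rewrite /derive (cvg_at_rightE (fun h : R => h^-1 *: ((F \o shift t) (h *: v) - F t))) //.
apply: limr_ge.
  rewrite -(cvg_at_rightE (fun h : R => h^-1 *: ((F \o shift t) (h *: v) - F t))) //.
  apply: cvg_trans dF; apply: cvg_app.
  move=> A [e egt0 Ae]; exists e => // x xe xgt0; apply: Ae => //.
  exact/lt0r_neq0.
near=> h; rewrite Ft0 subr0 /=.
apply: mulr_ge0; last exact: F0.
by rewrite invr_ge0; apply: ltW; near: h; exists 1 => /=.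
Unshelve. all: by end_near. Qed.

Lemma deriv_lin (F : V -> R) (t v : V) (c : R) :
  (forall (h : R) s, F (h *: v + s) = h * c + F s) ->
  derivable F t v /\ 'D_v F t = c.
Proof.
move=> hF.
have q : (fun h : R => h^-1 *: ((F \o shift t) (h *: v) - F t)) @ 0^' --> c.
  apply/cvgrPdist_le => e e0; near=> h => /=.
  rewrite hF addrK /=.
  have hn : h != 0 by near: h; exact: nbhs_dnbhs_neq.
  rewrite [_ *: _](_ : _ = h^-1 * (h * c)) // mulrA mulVf // mul1r subrr normr0.
  exact: ltW.
split; first by apply/cvg_ex; exists c.
exact: cvg_lim.
Unshelve. all: by end_near. Qed.

Lemma measurable_deriv d (T : measurableType d) (D : set T) (F : T -> V -> R) (t v : V) :
  (forall s, measurable_fun D (fun x => F x s)) ->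
  (forall x, D x -> derivable (F x) t v) ->
  measurable_fun D (fun x => 'D_v (F x) t).
Proof.
move=> mF dF.
apply: (@measurable_fun_cvg _ _ _ D
  (fun n x => (harmonic n)^-1 * (F x (harmonic n *: v + t) - F x t))).
  move=> n; apply: measurable_funM => //; apply: measurable_funB; exact: mF.
move=> x Dx.
have /cvg_ex[l hl] := dF x Dx.
have -> : 'D_v (F x) t = l by exact: cvg_lim.
move/cvgr_dnbhsP : hl => /(_ (@harmonic R)); apply.
split; last exact: cvg_harmonic.
by move=> n; rewrite gt_eqF // harmonic_gt0.
Qed.

End Deriv.


Lemma mxoppE (R : ringType) m n (A : 'M[R]_(m, n)) i j : (- A) i j = - A i j.
Proof. by rewrite mxE. Qed.

Lemma psd_add (R : realType) n (A B : 'M[R]_n) : psd A -> psd B -> psd (A + B).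
Proof.
move=> pA pB w; rewrite mulmxDr mulmxDl mxaddE; exact: addr_ge0.
Qed.

Lemma psd_scale (R : realType) n c (A : 'M[R]_n) : 0 <= c -> psd A -> psd (c *: A).
Proof.
move=> c0 pA w; rewrite -scalemxAr -scalemxAl mxscaleE; exact: mulr_ge0.
Qed.

Lemma psd0 (R : realType) n : psd (0 : 'M[R]_n).
Proof. by move=> w; rewrite mulmx0 mul0mx mxzeroE. Qed.

Lemma psd_sum (R : realType) n (I : Type) (r : seq I) (F : I -> 'M[R]_n) :
  (forall i, psd (F i)) -> psd (\sum_(i <- r) F i).
Proof.
move=> pF; elim: r => [|i r ih]; first by rewrite big_nil; exact: psd0.
by rewrite big_cons; apply: psd_add.
Qed.

Lemma alg1 (R : comRingType) (a b c x : R) : (a + b - c) - (x + b - c) = a - x.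
Proof. by ring. Qed.

Lemma alg2 (R : comRingType) (P C ci cj bi bj : R) :
  P * (C - ci * bj - bi * cj + ci * cj) = P * C + P * (ci * cj) - P * (ci * bj + bi * cj).
Proof. by ring. Qed.

Section Model.
Variables (R : realType) (d : measure_display) (T : measurableType d)
  (mu : {measure set T -> \bar R}) (M K : nat)
  (Lams : 'I_K -> {set 'I_M}) (Lam : {set 'I_M})
  (f : 'cV[R]_#|Lam| -> T -> R) (sel : T -> 'I_K) (th : T -> 'cV[R]_M).
Local Notation L := #|Lam|.
Hypothesis hth_meas : forall m, measurable_fun setT (fun x => th x m 0).
Hypothesis hth_2 : forall t m, mu.-integrable setT (fun x => ((th x m 0) ^+ 2 * f t x)%:E).
Hypothesis hcoh : forall x m, m \notin Lams (sel x) -> th x m 0 = 0.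
Hypothesis hf_meas : forall t, measurable_fun setT (f t).
Hypothesis hf_ge0 : forall t x, 0 <= f t x.
Hypothesis hf_1 : forall t, (\int[mu]_x (f t x)%:E = 1)%E.
Hypothesis hsel : forall k, measurable (selset sel k).
Hypothesis hC1_pi : forall k t, prob mu f sel k t != 0.
Hypothesis hC1_score : forall k t x l, selset sel k x ->
      derivable (fcond mu f sel k x) t (ebasis l).
Hypothesis hC2 : forall k (g : T -> R) l,
      measurable_fun setT g ->
      (forall s, mu.-integrable (selset sel k)
                   (fun x => (g x * fcond mu f sel k x s)%:E)) ->
      (forall s, mu.-integrable (selset sel k)
                   (fun x => (g x * 'D_(ebasis l) (fcond mu f sel k x) s)%:E)) ->
      forall t,
        derivable (fun s => \int[mu]_(x in selset sel k) (g x * fcond mu f sel k x s))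
                  t (ebasis l) /\
        'D_(ebasis l) (fun s => \int[mu]_(x in selset sel k) (g x * fcond mu f sel k x s)) t
          = \int[mu]_(x in selset sel k) (g x * 'D_(ebasis l) (fcond mu f sel k x) t).
Hypothesis hC1_inv : forall k t, sFIM mu f sel k t \in unitmx.
Hypothesis hb : forall k t, differentiable (sbias mu Lams f sel th k) t.
Hypothesis hC1_J : forall k t i j, mu.-integrable (selset sel k)
      (fun x => (score mu f sel k x t i 0 * score mu f sel k x t j 0
                 * fcond mu f sel k x t)%:E).

Local Notation A k := (selset sel k).
Local Notation p k s := (prob mu f sel k s).
Local Notation rho k s := (fun x => fcond mu f sel k x s).
Local Notation E k s := (Ex mu (A k) (rho k s)).
Local Notation I k s := (Ix mu (A k) (rho k s)).
Local Notation v k s x := (score mu f sel k x s).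
Local Notation Dfc k l s x := ('D_(ebasis l) (fcond mu f sel k x) s).

Lemma p_gt0 k s : 0 < p k s.
Proof.
rewrite lt_def hC1_pi /=; apply: Rintegral_ge0 => x _; exact: hf_ge0.
Qed.

Lemma f_int s : mu.-integrable setT (EFin \o f s).
Proof.
apply/integrableP; split; first exact/measurable_EFinP.
rewrite (eq_integral (fun x => (f s x)%:E)); last by move=> x _; rewrite /comp abse_EFin ger0_norm.
by rewrite hf_1 ltry.
Qed.

Lemma f_intA k s : mu.-integrable (A k) (EFin \o f s).
Proof. exact: (integrableS measurableT (hsel k) (@subsetT _ _) (f_int s)). Qed.

Lemma rho0 k s x : 0 <= fcond mu f sel k x s.
Proof. by rewrite /fcond divr_ge0 // ltW // p_gt0. Qed.

Lemma rho_meas k s : measurable_fun (A k) (rho k s).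
Proof.
apply: measurable_funM => //; apply: measurable_funS (hf_meas s) => //.
Qed.

Lemma I1 k s : I k s (fun _ => 1).
Proof.
apply: (ieq (hsel k) (integrableZl (hsel k) (p k s)^-1 (f_intA k s))).
by move=> x _ /=; rewrite -EFinM /fcond mul1r mulrC.
Qed.

Lemma E1 k s : E k s (fun _ => 1) = 1.
Proof.
rewrite /Ex; under eq_Rintegral do rewrite mul1r /fcond.
rewrite RintegralZr //; last exact: f_intA.
by rewrite [X in X * _](_ : _ = p k s) // mulfV.
Qed.

Lemma Dfc_eq k l s x : A k x -> Dfc k l s x = v k s x l 0 * fcond mu f sel k x s.
Proof.
move=> Ax; rewrite /score mxE.
have [e0|nz] := eqVneq (fcond mu f sel k x s) 0; last by rewrite divfK.
rewrite e0 mulr0; apply: deriv_min0 => //; first exact: hC1_score.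
by move=> s'; exact: rho0.
Qed.

Lemma Dfc_meas k l s : measurable_fun (A k) (fun x => Dfc k l s x).
Proof.
apply: measurable_deriv => [s'|x Ax]; first exact: rho_meas.
exact: hC1_score.
Qed.

Definition L2 k s (h : T -> R) := measurable_fun (A k) h /\ I k s (fun x => h x * h x).

Lemma I_prod k s h1 h2 : L2 k s h1 -> L2 k s h2 -> I k s (fun x => h1 x * h2 x).
Proof.
move=> [m1 i1] [m2 i2]; apply: (IxM (hsel k) (fun x _ => rho0 k s x)) => //.
by apply: measurable_funM; [exact: measurable_funM|exact: rho_meas].
Qed.

Lemma L2_cst k s c : L2 k s (fun _ => c).
Proof.
split => //; apply: (Ix_eq (hsel k) (h1 := fun x => (c * c) * 1)).
  by move=> x _; rewrite mulr1.
exact: (IxZ (hsel k) _ (I1 k s)).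
Qed.

Lemma I_of_L2 k s h : L2 k s h -> I k s h.
Proof.
move=> Lh; apply: (Ix_eq (hsel k) (h1 := fun x => h x * 1)).
  by move=> x _; rewrite mulr1.
by apply: I_prod => //; exact: L2_cst.
Qed.

Lemma L2_add k s h1 h2 : L2 k s h1 -> L2 k s h2 -> L2 k s (fun x => h1 x + h2 x).
Proof.
move=> L1 L2'; split; first by apply: measurable_funD; [case: L1|case: L2'].
apply: (Ix_eq (hsel k) (h1 := fun x => h1 x * h1 x + 2 * (h1 x * h2 x) + h2 x * h2 x)).
  by move=> x _; ring.
apply: (IxD (hsel k)); first apply: (IxD (hsel k)).
- by case: L1.
- by apply: (IxZ (hsel k)); exact: I_prod.
- by case: L2'.
Qed.

Lemma L2_scale k s c h : L2 k s h -> L2 k s (fun x => c * h x).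
Proof.
move=> [m i]; split; first exact: measurable_funM.
apply: (Ix_eq (hsel k) (h1 := fun x => (c * c) * (h x * h x))).
  by move=> x _; ring.
exact: (IxZ (hsel k)).
Qed.

Lemma L2_sub k s h1 h2 : L2 k s h1 -> L2 k s h2 -> L2 k s (fun x => h1 x - h2 x).
Proof.
move=> L1 L2'; have := L2_add L1 (L2_scale (-1) L2').
by congr L2; apply/funext => x; rewrite mulN1r.
Qed.

Lemma L2_sum k s (J : Type) (r : seq J) (h : J -> T -> R) :
  (forall j, L2 k s (h j)) -> L2 k s (fun x => \sum_(j <- r) h j x).
Proof.
move=> Lh; elim: r => [|j r ih].
  by have := L2_cst k s 0; congr L2; apply/funext => x; rewrite big_nil.
by have := L2_add (Lh j) ih; congr L2; apply/funext => x; rewrite big_cons.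
Qed.

Lemma L2_th k s m : L2 k s (fun x => th x m 0).
Proof.
split; first exact: measurable_funS (hth_meas m).
apply: (ieq (hsel k) (integrableZl (hsel k) (p k s)^-1
  (integrableS measurableT (hsel k) (@subsetT _ _) (hth_2 s m)))) => x _ /=.
by rewrite -EFinM /fcond expr2; congr EFin; ring.
Qed.

Lemma Ivv k s i j : I k s (fun x => v k s x i 0 * v k s x j 0).
Proof. exact: hC1_J. Qed.

Lemma I_hv k s h l : L2 k s h -> I k s (fun x => h x * v k s x l 0).
Proof.
move=> [mh ih]; apply: (IxM (hsel k) (fun x _ => rho0 k s x)) => //; last exact: Ivv.
apply: (eq_measurable_fun (fun x => h x * Dfc k l s x)).
  by move=> x /set_mem Ax; rewrite Dfc_eq // mulrA.
by apply: measurable_funM => //; exact: Dfc_meas.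
Qed.

Lemma I_hDfc k s h l : L2 k s h ->
  mu.-integrable (A k) (fun x => (h x * Dfc k l s x)%:E).
Proof.
move=> Lh; apply: (ieq (hsel k) (I_hv l Lh)) => x Ax /=.
by rewrite Dfc_eq // mulrA.
Qed.

Lemma Ev0 k s l : E k s (fun x => v k s x l 0) = 0.
Proof.
have Lc1 : L2 k s (fun _ => 1) := L2_cst k s 1.
have [_ hD] := @hC2 k (fun _ => 1) l (measurable_cst (1 : R))
  (fun s' => I1 k s') (fun s' => I_hDfc l (L2_cst k s' 1)) s.
have e1 : (fun s' => \int[mu]_(x in A k) (1 * fcond mu f sel k x s')) = cst 1.
  by apply/funext => s'; exact: (E1 k s').
rewrite e1 derive_cst in hD.
rewrite hD /Ex; apply: eq_Rintegral => x /set_mem Ax.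
by rewrite Dfc_eq // mul1r.
Qed.

Lemma zpE (S : {set 'I_M}) (a : 'cV[R]_M) m : zp S a m 0 = (m \in S)%:R * a m 0.
Proof. by rewrite /zp mxE; case: (m \in S); rewrite ?mul1r ?mul0r. Qed.

Definition gg k m x := (m \in Lams k)%:R * th x m 0.
Definition cc k m (s : 'cV[R]_L) := zp (Lams k) (@theta_of R M Lam s) m 0.
Definition ee k (s : 'cV[R]_L) m x := gg k m x - cc k m s.

Lemma L2_gg k s m : L2 k s (gg k m).
Proof. exact: L2_scale (L2_th k s m). Qed.

Lemma L2_ee k s m : L2 k s (ee k s m).
Proof. by apply: L2_sub; [exact: L2_gg|exact: L2_cst]. Qed.

Lemma Ecst k s c : E k s (fun _ => c) = c.
Proof.
rewrite (Ex_eq mu _ (h2 := fun _ => c * 1)); last by move=> x _; rewrite mulr1.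
by rewrite (ExZ (hsel k)) ?E1 ?mulr1 //; exact: I1.
Qed.

Lemma sbias_ent k s m : sbias mu Lams f sel th k s m 0 = E k s (ee k s m).
Proof.
rewrite /sbias /cexpmx mxE /cexp; apply: eq_Rintegral => x _.
by rewrite mxsubE /ee /gg /cc !zpE.
Qed.

Lemma E_ee k s m : E k s (ee k s m) = E k s (gg k m) - cc k m s.
Proof.
rewrite /ee (ExB (hsel k)) ?Ecst //; first exact: I_of_L2 (L2_gg k s m).
exact: I_of_L2 (L2_cst k s _).
Qed.

Lemma theta_lin (h : R) (l : 'I_L) (s : 'cV[R]_L) m :
  theta_of (h *: ebasis l + s) m 0 = h * (m == enum_val l)%:R + theta_of s m 0.
Proof.
rewrite /theta_of !mxE.
have -> : \sum_(l' < L) (if m == enum_val l' then (h *: ebasis l + s) l' 0 else 0)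
   = h * \sum_(l' < L) (if m == enum_val l' then ((l' == l)%:R : R) else 0)
     + \sum_(l' < L) (if m == enum_val l' then s l' 0 else 0).
  rewrite mulr_sumr -big_split /=; apply: eq_bigr => l' _.
  rewrite mxaddE mxscaleE /ebasis mxE andbT.
  by case: ifP => _; rewrite ?mulr0 ?addr0.
congr (h * _ + _).
rewrite (bigD1 l) //= eqxx big1 ?addr0; first by case: ifP.
by move=> l' nl; rewrite (negbTE nl); case: ifP.
Qed.

Lemma cc_lin k m (l : 'I_L) (h : R) (s : 'cV[R]_L) :
  cc k m (h *: ebasis l + s) = h * Dmat (Lams k) Lam m l + cc k m s.
Proof.
rewrite /cc !zpE theta_lin mulrDr; congr (_ + _).
rewrite /Dmat mxE.
by case: (m \in Lams k); case: (m == enum_val l); rewrite /= ?mul1r ?mul0r ?mulr0 ?mulr1.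
Qed.

Lemma mgg k m : measurable_fun setT (gg k m).
Proof. by apply: measurable_funM => //; exact: hth_meas. Qed.

Lemma Gent k t m l : Gmat mu Lams f sel th k t m l =
  E k t (fun x => gg k m x * v k t x l 0) - Dmat (Lams k) Lam m l.
Proof.
rewrite /Gmat mxE derive_mx; last exact: diff_derivable (hb k t).
rewrite mxE.
have e : (fun s => sbias mu Lams f sel th k s m 0) =
    (fun s => \int[mu]_(x in A k) (gg k m x * fcond mu f sel k x s)) - (fun s => cc k m s).
  by apply/funext => s; rewrite sbias_ent E_ee.
rewrite e.
have [dg Dg] := @hC2 k (gg k m) l (mgg k m) (fun s => I_of_L2 (L2_gg k s m))
  (fun s => I_hDfc l (L2_gg k s m)) t.
have [dc Dc] := @deriv_lin _ _ (fun s => cc k m s) t (ebasis l) (Dmat (Lams k) Lam m l)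
  (fun h s => cc_lin k m l h s).
rewrite deriveB // Dg Dc; congr (_ - _).
rewrite /Ex; apply: eq_Rintegral => x /set_mem Ax; by rewrite Dfc_eq // mulrA.
Qed.

Definition Ck k t := \matrix_(i, j) E k t (fun x => ee k t i x * ee k t j x).

Lemma bbE (b : 'cV[R]_M) i j : (b *m b^T) i j = b i 0 * b j 0.
Proof. by rewrite mxE big_ord1 trE. Qed.

Lemma Iv k s l : I k s (fun x => v k s x l 0).
Proof.
apply: (Ix_eq (hsel k) (h1 := fun x => 1 * v k s x l 0)); first by move=> x _; rewrite mul1r.
by apply: I_hv; exact: L2_cst.
Qed.

Lemma E_eev k t m l :
  E k t (fun x => ee k t m x * v k t x l 0) = E k t (fun x => gg k m x * v k t x l 0).
Proof.
rewrite (Ex_eq mu _ (h2 := fun x => gg k m x * v k t x l 0 - cc k m t * v k t x l 0));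
  last by move=> x _; rewrite /ee mulrBl.
rewrite (ExB (hsel k)); first last.
- by apply: (IxZ (hsel k)); exact: Iv.
- by apply: I_hv; exact: L2_gg.
by rewrite (ExZ (hsel k)) ?Ev0 ?mulr0 ?subr0 //; exact: Iv.
Qed.

Lemma psd_k k t : psd (Ck k t - sbias mu Lams f sel th k t *m (sbias mu Lams f sel th k t)^T
   - Psi mu Lams f sel th k t).
Proof.
set b := sbias mu Lams f sel th k t.
pose u x : 'cV[R]_M := \col_m (ee k t m x - b m 0).
have uE x i : u x i 0 = ee k t i x - b i 0 by rewrite mxE.
have Lu i : L2 k t (fun x => ee k t i x - b i 0) by apply: L2_sub; [exact: L2_ee|exact: L2_cst].
have Eb i : E k t (ee k t i) = b i 0 by rewrite sbias_ent.
rewrite /Psi.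
apply: (@cs_vec _ _ _ mu (A k) (hsel k) (rho k t) (fun x _ => rho0 k t x) M L u (fun x => v k t x)).
- move=> i j; apply: (Ix_eq (hsel k) (h1 := fun x => (ee k t i x - b i 0) * (ee k t j x - b j 0))).
    by move=> x _; rewrite !uE.
  exact: I_prod.
- move=> m l; apply: (Ix_eq (hsel k) (h1 := fun x => (ee k t m x - b m 0) * v k t x l 0)).
    by move=> x _; rewrite !uE.
  exact: I_hv.
- exact: Ivv.
- move=> i j; rewrite mxsubE bbE mxE.
  rewrite (Ex_eq mu _ (h2 := fun x => ee k t i x * ee k t j x
      - b j 0 * ee k t i x - b i 0 * ee k t j x + (b i 0 * b j 0) * 1)).
    2: by move=> x _; rewrite !uE; ring.
  have Ie i' : I k t (ee k t i') by exact: I_of_L2 (L2_ee k t i').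
  rewrite (ExD (hsel k)); first last.
  + by apply: (IxZ (hsel k)); exact: I1.
  + apply: (IxB (hsel k)); last by apply: (IxZ (hsel k)).
    apply: (IxB (hsel k)); last by apply: (IxZ (hsel k)).
    by apply: I_prod; exact: L2_ee.
  rewrite (ExB (hsel k)); first last.
  + by apply: (IxZ (hsel k)).
  + apply: (IxB (hsel k)); last by apply: (IxZ (hsel k)).
    by apply: I_prod; exact: L2_ee.
  rewrite (ExB (hsel k)); first last.
  + by apply: (IxZ (hsel k)).
  + by apply: I_prod; exact: L2_ee.
  rewrite !(ExZ (hsel k)) //; last exact: I1.
  rewrite !Eb E1; ring.
- move=> m l; rewrite mxaddE Gent addrC subrK.
  rewrite (Ex_eq mu _ (h2 := fun x => ee k t m x * v k t x l 0 - b m 0 * v k t x l 0)).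
    2: by move=> x _; rewrite uE mulrBl.
  rewrite (ExB (hsel k)); first last.
  + by apply: (IxZ (hsel k)); exact: Iv.
  + by apply: I_hv; exact: L2_ee.
  rewrite (ExZ (hsel k)) ?Ev0 ?mulr0 ?subr0 ?E_eev //; exact: Iv.
- move=> i j; rewrite /sFIM /cexpmx mxE /cexp /Ex; apply: eq_Rintegral => x _.
  by rewrite [in RHS]mxE big_ord1 trE.
- exact: hC1_inv.
Qed.

Lemma outerE (a b : 'cV[R]_M) i j : (a *m b^T) i j = a i 0 * b j 0.
Proof. by rewrite mxE big_ord1 trE. Qed.

Lemma Rint_part (F : T -> R) : (forall k, mu.-integrable (A k) (EFin \o F)) ->
  \int[mu]_x F x = \sum_k \int[mu]_(x in A k) F x.
Proof.
move=> iF.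
under eq_bigr do rewrite Rintegral_mkcond.
rewrite -Rintegral_sum //; last first.
  move=> k; apply: (ieq measurableT ((integrable_mkcond _ (hsel k)).1 (iF k))).
  by move=> x _ /=; rewrite /patch; case: ifP.
apply: eq_Rintegral => x _.
rewrite (bigD1 (sel x)) //= big1 ?addr0.
  by rewrite /patch mem_set.
move=> k nk; rewrite /patch memNset //.
by rewrite /selset /= => e; move: nk; rewrite e eqxx.
Qed.

Lemma Rint_scale k t (F h : T -> R) : I k t h -> (forall x, A k x -> F x = h x * f t x) ->
  mu.-integrable (A k) (EFin \o F) /\ \int[mu]_(x in A k) F x = p k t * E k t h.
Proof.
move=> ih eF.
have e x : A k x -> F x = p k t * (h x * fcond mu f sel k x t).
  move=> Ax; rewrite eF // /fcond; have := hC1_pi k t; move: (p k t) => q q0.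
  by field.
split.
  apply: (ieq (hsel k) (integrableZl (hsel k) (p k t) ih)) => x Ax /=.
  by rewrite -EFinM e.
rewrite /Ex -RintegralZl //; apply: eq_Rintegral => x /set_mem Ax.
by rewrite e.
Qed.

Lemma MSSE_ent t i j : MSSE mu Lams f sel th t i j = \sum_k p k t * Ck k t i j.
Proof.
have eF k x : A k x -> SSE Lams sel th t x i j * f t x = (ee k t i x * ee k t j x) * f t x.
  move=> Ax; rewrite /SSE outerE Ax !mxsubE !zpE.
  by rewrite /ee /gg /cc !zpE.
have I2 k : I k t (fun x => ee k t i x * ee k t j x) by apply: I_prod; exact: L2_ee.
rewrite /MSSE /expmx mxE Rint_part; last by move=> k; case: (Rint_scale (I2 k) (eF k)).
apply: eq_bigr => k _; rewrite mxE.
by case: (Rint_scale (I2 k) (eF k)).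
Qed.

Lemma E_expand k t i j (a c : R) :
  E k t (fun x => (ee k t i x - a) * (ee k t j x - c)) =
  E k t (fun x => ee k t i x * ee k t j x) - c * E k t (ee k t i)
    - a * E k t (ee k t j) + a * c.
Proof.
rewrite (Ex_eq mu _ (h2 := fun x => ee k t i x * ee k t j x
      - c * ee k t i x - a * ee k t j x + (a * c) * 1)).
  2: by move=> x _; ring.
have Ie i' : I k t (ee k t i') by exact: I_of_L2 (L2_ee k t i').
rewrite (ExD (hsel k)); first last.
+ by apply: (IxZ (hsel k)); exact: I1.
+ apply: (IxB (hsel k)); last by apply: (IxZ (hsel k)).
  apply: (IxB (hsel k)); last by apply: (IxZ (hsel k)).
  by apply: I_prod; exact: L2_ee.
rewrite (ExB (hsel k)); first last.
+ by apply: (IxZ (hsel k)).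
+ apply: (IxB (hsel k)); last by apply: (IxZ (hsel k)).
  by apply: I_prod; exact: L2_ee.
rewrite (ExB (hsel k)); first last.
+ by apply: (IxZ (hsel k)).
+ by apply: I_prod; exact: L2_ee.
rewrite !(ExZ (hsel k)) //; last exact: I1.
by rewrite E1 mulr1.
Qed.

Definition cz k i (t : 'cV[R]_L) := zp (~: Lams k) (@theta_of R M Lam t) i 0.

Lemma MSE_ent t i j : MSE mu f th t i j = \sum_k p k t *
   (Ck k t i j - cz k i t * sbias mu Lams f sel th k t j 0
     - sbias mu Lams f sel th k t i 0 * cz k j t + cz k i t * cz k j t).
Proof.
have eth k x i' : A k x -> (th x - theta_of t) i' 0 = ee k t i' x - cz k i' t.
  move=> Ax; rewrite mxsubE /ee /gg /cc /cz !zpE finset.in_setC.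
  case hi: (i' \in Lams k); rewrite /= ?mul1r ?mul0r ?subr0 ?sub0r //.
  rewrite hcoh; first by rewrite sub0r.
  by rewrite Ax hi.
have eF k x : A k x -> ((th x - theta_of t) *m (th x - theta_of t)^T) i j * f t x
    = ((ee k t i x - cz k i t) * (ee k t j x - cz k j t)) * f t x.
  by move=> Ax; rewrite outerE !(eth k x).
have I2 k : I k t (fun x => (ee k t i x - cz k i t) * (ee k t j x - cz k j t)).
  by apply: I_prod; apply: L2_sub; (exact: L2_ee || exact: L2_cst).
rewrite /MSE /expmx mxE Rint_part; last by move=> k; case: (Rint_scale (I2 k) (eF k)).
apply: eq_bigr => k _.
case: (Rint_scale (I2 k) (eF k)) => _ ->; congr (_ * _).
rewrite E_expand !sbias_ent mxE.
ring.
Qed.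

Lemma part1 t : psd_ge (MSSE mu Lams f sel th t) (BsCRB mu Lams f sel th t).
Proof.
rewrite /psd_ge.
have -> : MSSE mu Lams f sel th t - BsCRB mu Lams f sel th t =
  \sum_k p k t *: (Ck k t - sbias mu Lams f sel th k t *m (sbias mu Lams f sel th k t)^T
   - Psi mu Lams f sel th k t).
  rewrite /BsCRB (eq_bigl (fun _ => true)); last by move=> k /=; rewrite hC1_pi.
  apply/matrixP => i j; rewrite mxsubE MSSE_ent.
  rewrite !summxE -sumrB; apply: eq_bigr => k _.
  rewrite !mxscaleE !mxsubE !mxaddE; ring.
apply: psd_sum => k; apply: psd_scale; first exact: ltW (p_gt0 k t).
exact: psd_k.
Qed.

Lemma part2 t : psd_ge (MSE mu f th t)
      (BsCRB mu Lams f sel th t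
       + \sum_(k < K) prob mu f sel k t *:
           (zp (~: Lams k) (theta_of t) *m (zp (~: Lams k) (theta_of t))^T)
       - \sum_(k < K) prob mu f sel k t *:
           (zp (~: Lams k) (theta_of t) *m (sbias mu Lams f sel th k t)^T
            + sbias mu Lams f sel th k t *m (zp (~: Lams k) (theta_of t))^T)).
Proof.
rewrite /psd_ge.
suff -> : MSE mu f th t - (BsCRB mu Lams f sel th t
       + \sum_(k < K) prob mu f sel k t *:
           (zp (~: Lams k) (theta_of t) *m (zp (~: Lams k) (theta_of t))^T)
       - \sum_(k < K) prob mu f sel k t *:
           (zp (~: Lams k) (theta_of t) *m (sbias mu Lams f sel th k t)^T
            + sbias mu Lams f sel th k t *m (zp (~: Lams k) (theta_of t))^T))
   = MSSE mu Lams f sel th t - BsCRB mu Lams f sel th t by exact: part1.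
apply/matrixP => i j.
rewrite !mxsubE !mxaddE MSE_ent MSSE_ent !summxE.
rewrite (_ : \sum_k _ = \sum_k p k t * Ck k t i j
    + \sum_k (p k t *: (zp (~: Lams k) (theta_of t) *m (zp (~: Lams k) (theta_of t))^T)) i j
    - \sum_k (p k t *: (zp (~: Lams k) (theta_of t) *m (sbias mu Lams f sel th k t)^T
            + sbias mu Lams f sel th k t *m (zp (~: Lams k) (theta_of t))^T)) i j).
  by apply: alg1.
rewrite -big_split -sumrB /=; apply: eq_bigr => k _.
rewrite !mxscaleE mxaddE !outerE /cz; exact: alg2.
Qed.

Lemma part3 t : (forall k s, sbias mu Lams f sel th k s = 0) ->
     BsCRB mu Lams f sel th t
       = \sum_(k < K | prob mu f sel k t != 0)
           prob mu f sel k t *: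
             (Dmat (Lams k) Lam *m invmx (sFIM mu f sel k t) *m (Dmat (Lams k) Lam)^T).
Proof.
move=> b0; rewrite /BsCRB; apply: eq_bigr => k _; congr (_ *: _).
rewrite b0 mul0mx addr0 /Psi.
have -> : Gmat mu Lams f sel th k t = 0.
  apply/matrixP => m l; rewrite /Gmat !mxE.
  have -> : sbias mu Lams f sel th k = cst 0 by apply/funext => s; exact: b0.
  by rewrite derive_cst mxE.
by rewrite addr0.
Qed.

End Model.

Theorem theorem1
  (R : realType) (d : measure_display) (T : measurableType d)
  (mu : {measure set T -> \bar R})          (* reference measure "dx" on Omega_x *)
  (M K : nat)
  (Lams : 'I_K -> {set 'I_M})               (* candidate supports Lambda_1..Lambda_K *)
  (Lam : {set 'I_M})                        (* true support Lambda *)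
  (f : 'cV[R]_#|Lam| -> T -> R)             (* f t x = f(x; theta_Lam = t) *)
  (sel : T -> 'I_K)                         (* selection rule: Lam-hat(x) = Lams (sel x) *)
  (th : T -> 'cV[R]_M)                      (* estimator theta-hat *)
  (* setting *)
  (hLams : forall k, exists m, m \in Lams k)
  (hLam : exists k, Lams k = Lam)
  (* f(.; t) is a pdf w.r.t. mu *)
  (hf_meas : forall t, measurable_fun setT (f t))
  (hf_ge0 : forall t x, 0 <= f t x)
  (hf_1 : forall t, (\int[mu]_x (f t x)%:E = 1)%E)
  (* selection rule is measurable *)
  (hsel : forall k, measurable (selset sel k))
  (* estimator: measurable, finite second moments, coherent *)
  (hth_meas : forall m, measurable_fun setT (fun x => th x m 0))
  (hth_2 : forall t m, mu.-integrable setT (fun x => ((th x m 0) ^+ 2 * f t x)%:E))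
  (hcoh : forall x m, m \notin Lams (sel x) -> th x m 0 = 0)
  (* (C1): conditional densities defined, scores exist, J_k well defined and nonsingular *)
  (hC1_pi : forall k t, prob mu f sel k t != 0)
  (hC1_score : forall k t x l, selset sel k x ->
      derivable (fcond mu f sel k x) t (ebasis l))
  (hC1_J : forall k t i j, mu.-integrable (selset sel k)
      (fun x => (score mu f sel k x t i 0 * score mu f sel k x t j 0
                 * fcond mu f sel k x t)%:E))
  (hC1_inv : forall k t, sFIM mu f sel k t \in unitmx)
  (* (C2): differentiation under the integral sign *)
  (hC2 : forall k (g : T -> R) l,
      measurable_fun setT g ->
      (forall s, mu.-integrable (selset sel k)
                   (fun x => (g x * fcond mu f sel k x s)%:E)) ->
      (forall s, mu.-integrable (selset sel k)
                   (fun x => (g x * 'D_(ebasis l) (fcond mu f sel k x) s)%:E)) ->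
      forall t,
        derivable (fun s => \int[mu]_(x in selset sel k) (g x * fcond mu f sel k x s))
                  t (ebasis l) /\
        'D_(ebasis l) (fun s => \int[mu]_(x in selset sel k) (g x * fcond mu f sel k x s)) t
          = \int[mu]_(x in selset sel k) (g x * 'D_(ebasis l) (fcond mu f sel k x) t))
  (* selective biases differentiable in theta_Lam *)
  (hb : forall k t, differentiable (sbias mu Lams f sel th k) t) :
  forall t : 'cV[R]_#|Lam|,
    (* MSSE bound *)
    psd_ge (MSSE mu Lams f sel th t) (BsCRB mu Lams f sel th t)
  /\
    (* MSE bound *)
    psd_ge (MSE mu f th t)
      (BsCRB mu Lams f sel th t
       + \sum_(k < K) prob mu f sel k t *:
           (zp (~: Lams k) (theta_of t) *m (zp (~: Lams k) (theta_of t))^T)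
       - \sum_(k < K) prob mu f sel k t *:
           (zp (~: Lams k) (theta_of t) *m (sbias mu Lams f sel th k t)^T
            + sbias mu Lams f sel th k t *m (zp (~: Lams k) (theta_of t))^T))
  /\
    (* selectively unbiased case *)
    ((forall k s, sbias mu Lams f sel th k s = 0) ->
     BsCRB mu Lams f sel th t
       = \sum_(k < K | prob mu f sel k t != 0)
           prob mu f sel k t *:
             (Dmat (Lams k) Lam *m invmx (sFIM mu f sel k t) *m (Dmat (Lams k) Lam)^T)).
Proof.
move=> t.
split; first by apply: part1.
split; first by apply: part2.
by apply: part3.
Qed.
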